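(* There is a universal constant $K$ such that for every network $G(V)$ with $|V|\ge2$, writing $\gamma_2=\gamma_2(V,\sqrt{R_{\mathrm{eff}}})$, for all $u\ge16$, $$\sum_{v\in V}e^{-u\,c_v\,\gamma_2^2}\le K\,e^{-u/8}.$$
   Context: A network is a finite connected graph $G=(V,E)$ with symmetric conductances $c_{xy}\ge0$, $c_{xy}>0$ iff $xy\in E$; $c_v=\sum_yc_{vy}$; $R_{\mathrm{eff}}$ is effective resistance and $\sqrt{R_{\mathrm{eff}}}$ is the metric $(x,y)\mapsto\sqrt{R_{\mathrm{eff}}(x,y)}$. Talagrand's functional: with $M_0=1$, $M_k=2^{2^k}$, an admissible sequence is a nested sequence of partitions $\{\mathcal A_k\}_{k\ge0}$ ($\mathcal A_{k+1}$ refines $\mathcal A_k$) with $|\mathcal A_k|\le M_k$; $\gamma_2(X,d)=\inf\sup_{x}\sum_{k\ge0}2^{k/2}\mathrm{diam}(A_k(x))$ over admissible sequences, $A_k(x)$ the block of $\mathcal A_k$ containing $x$. *)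

(* Defs.v *)
(* classical reals. Vertices of a network are 0,...,n-1. *)
From Stdlib Require Import Reals Lra List Arith ClassicalEpsilon.
Import ListNotations.
Open Scope R_scope.

Definition sumV (n : nat) (f : nat -> R) : R :=
  fold_right Rplus 0 (map f (seq 0 n)).

Inductive reach (n : nat) (c : nat -> nat -> R) : nat -> nat -> Prop :=
| reach_refl x : reach n c x x
| reach_step x z y : (z < n)%nat -> c x z > 0 -> reach n c z y -> reach n c x y.

Definition network (n : nat) (c : nat -> nat -> R) : Prop :=
  (forall x y, (x < n)%nat -> (y < n)%nat -> c x y = c y x) /\
  (forall x y, (x < n)%nat -> (y < n)%nat -> 0 <= c x y) /\
  (forall x, (x < n)%nat -> c x x = 0) /\
  (forall x y, (x < n)%nat -> (y < n)%nat -> reach n c x y).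

Definition cvert (n : nat) (c : nat -> nat -> R) (v : nat) : R :=
  sumV n (fun y => c v y).

(* r is the effective resistance between x and y: the voltage drop
   phi x - phi y of a potential phi driving a unit current from x to y,
   i.e. sum_w c_vw (phi v - phi w) = 1_{v=x} - 1_{v=y} for all v in V. *)
Definition is_Reff (n : nat) (c : nat -> nat -> R) (x y : nat) (r : R) : Prop :=
  exists phi : nat -> R,
    (forall v, (v < n)%nat ->
       sumV n (fun w => c v w * (phi v - phi w)) =
       (if Nat.eqb v x then 1 else 0) - (if Nat.eqb v y then 1 else 0)) /\
    r = phi x - phi y.

Definition Reff (n : nat) (c : nat -> nat -> R) (x y : nat) : R :=
  epsilon (inhabits 0) (is_Reff n c x y).

Definition dist_sqrtReff (n : nat) (c : nat -> nat -> R) (x y : nat) : R :=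
  sqrt (Reff n c x y).

Definition Mk (k : nat) : nat :=
  match k with O => 1%nat | _ => (2 ^ (2 ^ k))%nat end.

(* A partition of V is encoded by a block-labelling P : nat -> nat
   (x, y in V lie in the same block iff P x = P y).
   A sequence of partitions is P : nat -> nat -> nat (P k = A_k). *)
Definition num_blocks (n : nat) (Q : nat -> nat) : nat :=
  length (nodup Nat.eq_dec (map Q (seq 0 n))).

Definition admissible (n : nat) (P : nat -> nat -> nat) : Prop :=
  (forall k, (num_blocks n (P k) <= Mk k)%nat) /\
  (forall k x y, (x < n)%nat -> (y < n)%nat ->
     P (S k) x = P (S k) y -> P k x = P k y).

Definition block (n : nat) (Q : nat -> nat) (x : nat) : list nat :=
  filter (fun y => Nat.eqb (Q y) (Q x)) (seq 0 n).

Definition diam (d : nat -> nat -> R) (B : list nat) : R :=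
  fold_right Rmax 0 (map (fun p => d (fst p) (snd p)) (list_prod B B)).

Definition gamma_partial (n : nat) (d : nat -> nat -> R)
    (P : nat -> nat -> nat) (x N : nat) : R :=
  fold_right Rplus 0
    (map (fun k => Rpower 2 (INR k / 2) * diam d (block n (P k) x)) (seq 0 (S N))).

(* t bounds sup_x sum_{k>=0} 2^{k/2} diam(A_k(x)) for some admissible sequence *)
Definition gamma2_bounds (n : nat) (d : nat -> nat -> R) (t : R) : Prop :=
  exists P, admissible n P /\
    forall x N, (x < n)%nat -> gamma_partial n d P x N <= t.

Definition is_glb (E : R -> Prop) (m : R) : Prop :=
  (forall t, E t -> m <= t) /\ (forall b, (forall t, E t -> b <= t) -> b <= m).

Definition gamma2 (n : nat) (d : nat -> nat -> R) : R :=
  epsilon (inhabits 0) (is_glb (gamma2_bounds n d)).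

(* Main.v *)
Require Import Defs.
From Stdlib Require Import Reals Lra List Arith Lia ClassicalEpsilon Classical.
Import ListNotations.
Open Scope R_scope.

Definition lsum (L : list nat) (f : nat -> R) : R := fold_right Rplus 0 (map f L).

Lemma lsum_app L1 L2 f : lsum (L1 ++ L2) f = lsum L1 f + lsum L2 f.
Proof. unfold lsum. induction L1; simpl; [lra|]. rewrite IHL1; lra. Qed.

Lemma sumV_S m f : sumV (S m) f = sumV m f + f m.
Proof. unfold sumV. rewrite seq_S. fold (lsum (seq 0 m ++ [0+m]%nat) f).
  rewrite lsum_app. unfold lsum; simpl. lra. Qed.

Lemma lsum_ext L f g : (forall x, In x L -> f x = g x) -> lsum L f = lsum L g.
Proof. unfold lsum; induction L; simpl; intros H; auto.
  rewrite H by auto. rewrite IHL; auto. Qed.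

Lemma lsum_le L f g : (forall x, In x L -> f x <= g x) -> lsum L f <= lsum L g.
Proof. unfold lsum; induction L; simpl; intros H; [lra|].
  assert (fold_right Rplus 0 (map f L) <= fold_right Rplus 0 (map g L)) by (apply IHL; intros; apply H; auto).
  specialize (H a (or_introl eq_refl)). lra. Qed.

Lemma lsum_plus L f g : lsum L (fun x => f x + g x) = lsum L f + lsum L g.
Proof. unfold lsum; induction L; simpl; [lra|]. rewrite IHL; lra. Qed.

Lemma lsum_minus L f g : lsum L (fun x => f x - g x) = lsum L f - lsum L g.
Proof. unfold lsum; induction L; simpl; [lra|]. rewrite IHL; lra. Qed.

Lemma lsum_scal L k f : lsum L (fun x => k * f x) = k * lsum L f.
Proof. unfold lsum; induction L; simpl; [lra|]. rewrite IHL; lra. Qed.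

Lemma lsum_nonneg L f : (forall x, In x L -> 0 <= f x) -> 0 <= lsum L f.
Proof. unfold lsum; induction L; simpl; intros H; [lra|].
  assert (0 <= fold_right Rplus 0 (map f L)) by (apply IHL; intros; apply H; auto).
  specialize (H a (or_introl eq_refl)). lra. Qed.

Lemma lsum_ge_term L f a : (forall x, In x L -> 0 <= f x) -> In a L -> f a <= lsum L f.
Proof. unfold lsum; induction L; simpl; intros H Ha; [tauto|].
  destruct Ha as [<-|Ha].
  - assert (0 <= lsum L f) by (apply lsum_nonneg; auto). unfold lsum in H0. lra.
  - assert (f a <= fold_right Rplus 0 (map f L)) by (apply IHL; auto). specialize (H a0 (or_introl eq_refl)). lra. Qed.

Lemma lsum_swap L1 L2 (a : nat -> nat -> R) :
  lsum L1 (fun x => lsum L2 (fun y => a x y)) = lsum L2 (fun y => lsum L1 (fun x => a x y)).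
Proof. induction L1; simpl.
  - unfold lsum at 1; simpl. symmetry. transitivity (lsum L2 (fun _ => 0)).
    + apply lsum_ext; intros; reflexivity.
    + unfold lsum; clear; induction L2; simpl; auto. rewrite IHL2; lra.
  - unfold lsum at 1; simpl. fold (lsum L1 (fun x => lsum L2 (fun y => a x y))). rewrite IHL1.
    rewrite <- lsum_plus. apply lsum_ext. intros. unfold lsum; simpl. lra. Qed.

Lemma sumV_lsum n f : sumV n f = lsum (seq 0 n) f.
Proof. reflexivity. Qed.

Lemma reach_last m c : forall x y, reach (S m) c x y -> (y < m)%nat -> x = m ->
  exists z, (z < m)%nat /\ c m z > 0.
Proof. intros x y H. induction H; intros Hy Hx.
  - lia.
  - subst. destruct (Nat.eq_dec z m) as [->|Hz]; [apply IHreach; auto|].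
    exists z; split; [lia|auto]. Qed.

Lemma reach_red m c c' :
  (forall a z, (a < m)%nat -> (z < m)%nat -> a <> z -> c a z <= c' a z) ->
  (forall a z, (a < m)%nat -> (z < m)%nat -> a <> z -> c a m > 0 -> c m z > 0 -> c' a z > 0) ->
  forall x y, reach (S m) c x y -> (y < m)%nat ->
   ((x < m)%nat -> reach m c' x y) /\
   (x = m -> exists z, (z < m)%nat /\ c m z > 0 /\ reach m c' z y).
Proof. intros H1 H2 x y H. induction H as [x|x z y Hz Hc Hr IH]; intros Hy.
  - split; intros; [constructor|lia].
  - destruct (IH Hy) as [IH1 IH2]. split.
    + intros Hx. destruct (Nat.eq_dec z m) as [->|Hzm].
      * destruct (IH2 eq_refl) as [z2 [Hz2 [Hc2 Hr2]]].
        destruct (Nat.eq_dec x z2) as [->|Hne]; auto.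
        apply reach_step with z2; [lia| apply H2; auto | auto].
      * destruct (Nat.eq_dec x z) as [->|Hne]; [apply IH1; lia|].
        apply reach_step with z; [lia| |apply IH1; lia].
        specialize (H1 x z Hx ltac:(lia) Hne). lra.
    + intros ->. destruct (Nat.eq_dec z m) as [->|Hzm]; [apply IH2; auto|].
      exists z; repeat split; auto; [lia| apply IH1; lia]. Qed.

Lemma lap_exists : forall n c b, (1 <= n)%nat ->
  (forall x y, (x < n)%nat -> (y < n)%nat -> c x y = c y x) ->
  (forall x y, (x < n)%nat -> (y < n)%nat -> 0 <= c x y) ->
  (forall x, (x < n)%nat -> c x x = 0) ->
  (forall x y, (x < n)%nat -> (y < n)%nat -> reach n c x y) ->
  sumV n b = 0 ->
  exists phi, forall v, (v < n)%nat -> sumV n (fun w => c v w * (phi v - phi w)) = b v.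
Proof.
  induction n as [|m IH]; intros c b Hn Hsym Hnn Hdiag Hconn Hb; [lia|].
  destruct (Nat.eq_dec m 0) as [->|Hm].
  - exists (fun _ => 0). intros v Hv. assert (v = 0%nat) by lia. subst.
    rewrite sumV_S in *. unfold sumV in *; simpl in *. lra.
  - destruct (reach_last m c m 0 (Hconn m 0%nat ltac:(lia) ltac:(lia)) ltac:(lia) eq_refl)
      as [z0 [Hz0 Hcz0]].
    set (D := sumV m (fun z => c m z)).
    assert (HD : D > 0).
    { assert (c m z0 <= D). { unfold D; rewrite sumV_lsum. apply (lsum_ge_term _ (fun z => c m z)).
        intros x Hx; apply in_seq in Hx; apply Hnn; lia. apply in_seq; lia. } lra. }
    set (c' := fun a z => if Nat.eqb a z then 0 else c a z + c a m * c m z / D).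
    set (b' := fun a => b a + c a m * b m / D).
    assert (Hext : forall a z, (a < m)%nat -> (z < m)%nat -> 0 <= c a m * c m z / D).
    { intros. apply Rmult_le_pos; [apply Rmult_le_pos; apply Hnn; lia|]. left; apply Rinv_0_lt_compat; lra. }
    destruct (IH c' b') as [phi' Hphi'].
    + lia.
    + intros x y Hx Hy. unfold c'. destruct (Nat.eqb_spec x y) as [->|Hne].
      * rewrite Nat.eqb_refl; auto.
      * destruct (Nat.eqb_spec y x); [congruence|]. rewrite (Hsym x y), (Hsym x m), (Hsym m y) by lia. lra.
    + intros x y Hx Hy. unfold c'. destruct (Nat.eqb x y); [lra|]. specialize (Hext x y Hx Hy).
      specialize (Hnn x y ltac:(lia) ltac:(lia)). lra.
    + intros x Hx. unfold c'. rewrite Nat.eqb_refl; auto.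
    + intros x y Hx Hy. apply (reach_red m c c'); auto; try lia.
      * intros a z Ha Hz Hne. unfold c'. destruct (Nat.eqb_spec a z); [congruence|].
        specialize (Hext a z Ha Hz). lra.
      * intros a z Ha Hz Hne H1 H2. unfold c'. destruct (Nat.eqb_spec a z); [congruence|].
        assert (0 < c a m * c m z / D). { apply Rmult_lt_0_compat; [apply Rmult_lt_0_compat; auto|]. apply Rinv_0_lt_compat; lra. }
        specialize (Hnn a z ltac:(lia) ltac:(lia)). lra.
    + unfold b'. rewrite sumV_lsum, lsum_plus.
      rewrite (lsum_ext _ (fun x => c x m * b m / D) (fun x => (b m / D) * c x m)) by (intros; field; lra).
      rewrite lsum_scal.
      rewrite (lsum_ext _ (fun x => c x m) (fun x => c m x)) by (intros x Hx; apply in_seq in Hx; apply Hsym; lia).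
      fold (sumV m (fun x => c m x)). fold D. rewrite sumV_S in Hb. rewrite <- sumV_lsum. change (lsum (seq 0 m) (fun x => c m x)) with D. replace (b m / D * D) with (b m) by (field; lra). lra.
    + set (S0 := sumV m (fun z => c m z * phi' z)).
      set (pm := (b m + S0) / D).
      exists (fun v => if Nat.eqb v m then pm else phi' v).
      intros v Hv. rewrite sumV_S. rewrite Nat.eqb_refl.
      assert (Hin : forall w, In w (seq 0 m) -> Nat.eqb w m = false).
      { intros w Hw; apply in_seq in Hw; apply Nat.eqb_neq; lia. }
      destruct (Nat.eqb_spec v m) as [->|Hvm].
      * rewrite sumV_lsum.
        rewrite (lsum_ext _ _ (fun w => pm * c m w - c m w * phi' w)) by (intros w Hw; rewrite Hin by auto; ring).
        rewrite lsum_minus, lsum_scal. rewrite <- !sumV_lsum. change (sumV m (c m)) with D. unfold pm. change (sumV m (fun x : nat => c m x * phi' x)) with S0. unfold Rminus at 2. rewrite Rplus_opp_r, Rmult_0_r, Rplus_0_r. unfold Rdiv. rewrite Rmult_assoc, Rinv_l, Rmult_1_r by lra. lra.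
      * assert (Hv' : (v < m)%nat) by lia. specialize (Hphi' v Hv').
        rewrite sumV_lsum in Hphi' |- *.
        rewrite (lsum_ext _ _ (fun w => c v w * (phi' v - phi' w))) by (intros w Hw; rewrite Hin by auto; reflexivity).
        rewrite (lsum_ext _ (fun w => c' v w * (phi' v - phi' w))
                  (fun w => c v w * (phi' v - phi' w) + (c v m / D) * (phi' v * c m w - c m w * phi' w))) in Hphi'.
        2:{ intros w Hw. unfold c'. destruct (Nat.eqb_spec v w) as [->|]; [ring|]. field. lra. }
        rewrite lsum_plus, lsum_scal, lsum_minus, lsum_scal in Hphi'. rewrite <- !sumV_lsum in Hphi'.
        fold D S0 in Hphi'. unfold b' in Hphi'. unfold pm.
        apply (Rmult_eq_reg_l D); [|lra].
        assert (D * (c v m * (phi' v - (b m + S0) / D)) = c v m * (D * phi' v - b m - S0)) by (field; lra).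
        rewrite Rmult_plus_distr_l, H.
        assert (D * (lsum (seq 0 m) (fun w => c v w * (phi' v - phi' w))) =
                D * b v + c v m * b m - c v m * (phi' v * D - S0)).
        { change (sumV m (c m)) with D in Hphi'. replace (lsum (seq 0 m) (fun w => c v w * (phi' v - phi' w))) with (b v + c v m * b m / D - c v m / D * (phi' v * D - S0)) by (rewrite <- sumV_lsum; lra). field. lra. }
        rewrite H0. ring.
Qed.

Lemma ind_sum0 x m : (x >= m)%nat -> sumV m (fun v => if Nat.eqb v x then 1 else 0) = 0.
Proof. induction m; intros H; [reflexivity|]. rewrite sumV_S, IHm by lia.
  destruct (Nat.eqb_spec m x); [lia|lra]. Qed.

Lemma ind_sum1 x n : (x < n)%nat -> sumV n (fun v => if Nat.eqb v x then 1 else 0) = 1.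
Proof. induction n; intros H; [lia|]. rewrite sumV_S.
  destruct (Nat.eqb_spec n x) as [->|Hne].
  - rewrite ind_sum0 by lia. lra.
  - rewrite IHn by lia. lra. Qed.

Lemma Reff_spec n c x y : network n c -> (x < n)%nat -> (y < n)%nat ->
  is_Reff n c x y (Reff n c x y).
Proof. intros [Hs [Hn [Hd Hc]]] Hx Hy. unfold Reff. apply epsilon_spec.
  destruct (lap_exists n c (fun v => (if Nat.eqb v x then 1 else 0) - (if Nat.eqb v y then 1 else 0)))
    as [phi Hphi]; auto; try lia.
  - rewrite sumV_lsum, lsum_minus, <- !sumV_lsum, !ind_sum1 by auto. lra.
  - exists (phi x - phi y). exists phi. split; auto. Qed.

Lemma Reff_diag n c x : network n c -> (x < n)%nat -> Reff n c x x = 0.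
Proof. intros. destruct (Reff_spec n c x x H H0 H0) as [phi [_ E]]. rewrite E. lra. Qed.

Lemma lsum_le_term_nonpos L f a : (forall x, In x L -> f x <= 0) -> In a L -> lsum L f <= f a.
Proof. intros H Ha.
  assert (- f a <= lsum L (fun x => -1 * f x)).
  { replace (- f a) with ((fun x => -1 * f x) a) by (simpl; ring). apply (lsum_ge_term L (fun x => -1 * f x) a); auto.
    intros x Hx; specialize (H x Hx); lra. }
  rewrite lsum_scal in H0. lra. Qed.

Lemma min_exists (phi : nat -> R) n : (1 <= n)%nat -> exists m, (m < n)%nat /\ forall z, (z < n)%nat -> phi m <= phi z.
Proof. induction n; intros H; [lia|]. destruct (Nat.eq_dec n 0) as [->|Hn].
  - exists 0%nat; split; [lia|]. intros z Hz; assert (z = 0%nat) by lia; subst; lra.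
  - destruct IHn as [m [Hm Hmin]]; [lia|].
    destruct (Rle_dec (phi m) (phi n)).
    + exists m; split; [lia|]. intros z Hz. destruct (Nat.eq_dec z n) as [->|]; auto. apply Hmin; lia.
    + exists n; split; [lia|]. intros z Hz. destruct (Nat.eq_dec z n) as [->|]; [lra|].
      specialize (Hmin z ltac:(lia)). lra. Qed.

Lemma Reff_lb n c v w : network n c -> (v < n)%nat -> (w < n)%nat -> v <> w ->
  1 <= cvert n c v * Reff n c v w.
Proof. intros Hnet Hv Hw Hvw. pose proof Hnet as [Hs [Hnn [Hd Hc]]].
  destruct (Reff_spec n c v w Hnet Hv Hw) as [phi [Hphi E]]. rewrite E.
  set (minz := fun x => forall z, (z < n)%nat -> phi x <= phi z).
  assert (Hstep : forall x y, reach n c x y -> (x < n)%nat -> minz x -> minz w \/ minz y).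
  { intros x y H. induction H as [x|x z y Hz Hcz Hr IH]; intros Hx Hmx; [right; auto|].
    destruct (Nat.eq_dec x w) as [->|Hxw]; [left; auto|].
    assert (Hterms : forall t, In t (seq 0 n) -> c x t * (phi x - phi t) <= 0).
    { intros t Ht; apply in_seq in Ht. specialize (Hmx t ltac:(lia)). specialize (Hnn x t Hx ltac:(lia)).
      assert (phi x - phi t <= 0) by lra. nra. }
    assert (Hle : sumV n (fun t => c x t * (phi x - phi t)) <= c x z * (phi x - phi z)).
    { apply (lsum_le_term_nonpos (seq 0 n) (fun t => c x t * (phi x - phi t)) z); auto. apply in_seq; lia. }
    assert (Hle0 : sumV n (fun t => c x t * (phi x - phi t)) <= 0).
    { specialize (Hterms z ltac:(apply in_seq; lia)). lra. }
    rewrite (Hphi x Hx) in Hle, Hle0.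
    destruct (Nat.eqb_spec x v) as [->|Hxv]; [destruct (Nat.eqb_spec v w); [congruence|lra]|].
    destruct (Nat.eqb_spec x w); [congruence|].
    apply IH; auto. assert (phi x - phi z >= 0).
    { destruct (Rle_dec 0 (phi x - phi z)); [lra|]. assert (c x z * (phi x - phi z) < 0) by nra. lra. }
    intros t Ht. specialize (Hmx t Ht). lra. }
  destruct (min_exists phi n ltac:(lia)) as [m [Hm Hmin]].
  assert (Hwmin : minz w) by (destruct (Hstep m w (Hc m w Hm Hw) Hm Hmin); auto).
  specialize (Hphi v Hv). rewrite Nat.eqb_refl in Hphi. destruct (Nat.eqb_spec v w); [congruence|].
  apply Rle_trans with (sumV n (fun t => c v t * (phi v - phi t))); [lra|]. unfold cvert. rewrite !sumV_lsum.
  rewrite <- (Rmult_comm (phi v - phi w)), <- lsum_scal. apply lsum_le.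
  intros t Ht; apply in_seq in Ht. specialize (Hwmin t ltac:(lia)). specialize (Hnn v t Hv ltac:(lia)).
  nra. Qed.

Lemma fold_Rmax_ge0 L : 0 <= fold_right Rmax 0 L.
Proof. induction L; simpl; [lra|]. apply Rle_trans with (1 := IHL); apply Rmax_r. Qed.

Lemma fold_Rmax_ge L a : In a L -> a <= fold_right Rmax 0 L.
Proof. induction L; simpl; [tauto|]. intros [->|H]; [apply Rmax_l|].
  apply Rle_trans with (1 := IHL H); apply Rmax_r. Qed.

Lemma fold_Rmax_le L M : 0 <= M -> (forall a, In a L -> a <= M) -> fold_right Rmax 0 L <= M.
Proof. induction L; simpl; intros H0 H; auto. apply Rmax_lub; auto. Qed.

Lemma diam_ge d B x y : In x B -> In y B -> d x y <= diam d B.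
Proof. intros. unfold diam. apply fold_Rmax_ge.
  change (d x y) with ((fun p => d (fst p) (snd p)) (x, y)). apply in_map. apply in_prod; auto. Qed.

Lemma diam_ge0 d B : 0 <= diam d B.
Proof. apply fold_Rmax_ge0. Qed.

Lemma in_block n Q x y : (y < n)%nat -> Q y = Q x -> In y (block n Q x).
Proof. intros. unfold block. apply filter_In. split; [apply in_seq; lia|]. apply Nat.eqb_eq; auto. Qed.

Lemma block_in n Q x y : In y (block n Q x) -> (y < n)%nat /\ Q y = Q x.
Proof. unfold block; intros H. apply filter_In in H as [H1 H2]. apply in_seq in H1.
  apply Nat.eqb_eq in H2. split; [lia|auto]. Qed.

Definition Rp (k : nat) : R := Rpower 2 (INR k / 2).

Lemma Rp_pos k : 0 < Rp k.
Proof. unfold Rp, Rpower. apply exp_pos. Qed.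

Lemma Rp_sq k : Rp k * Rp k = 2 ^ k.
Proof. unfold Rp. rewrite <- Rpower_plus. replace (INR k / 2 + INR k / 2) with (INR k) by field.
  apply Rpower_pow; lra. Qed.

Lemma Rp0 : Rp 0 = 1.
Proof. unfold Rp. simpl. replace (0/2) with 0 by field. apply Rpower_O; lra. Qed.

Lemma gp_term n d P x k : (forall a b, 0 <= d a b) -> Rp k * diam d (block n (P k) x) <= gamma_partial n d P x k.
Proof. intros Hd. unfold gamma_partial.
  apply (lsum_ge_term (seq 0 (S k)) (fun k => Rpower 2 (INR k / 2) * diam d (block n (P k) x)) k).
  - intros j _. apply Rmult_le_pos; [left; apply Rp_pos|apply diam_ge0].
  - apply in_seq; lia. Qed.

Lemma Mk_pos k : (1 <= Mk k)%nat.
Proof. destruct k; [simpl; lia|]. unfold Mk. pose proof (Nat.pow_nonzero 2 (2 ^ S k) ltac:(lia)). lia. Qed.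

Lemma Mk_mono k : (Mk k <= Mk (S k))%nat.
Proof. destruct k; [simpl; lia|]. unfold Mk. apply Nat.pow_le_mono_r; [lia|]. apply Nat.pow_le_mono_r; lia. Qed.

Lemma Mk_gt k : (k < Mk k)%nat.
Proof. destruct k; [simpl; lia|]. unfold Mk. pose proof (Nat.pow_gt_lin_r 2 (S k) ltac:(lia)).
  pose proof (Nat.pow_gt_lin_r 2 (2 ^ S k) ltac:(lia)). lia. Qed.

Definition P0 (k x : nat) : nat := Nat.min x (Mk k - 1).

Lemma P0_adm n : admissible n P0.
Proof. split.
  - intros k. unfold num_blocks. rewrite <- (length_seq (Mk k) 0).
    apply NoDup_incl_length; [apply NoDup_nodup|]. intros a Ha. apply nodup_In in Ha.
    apply in_map_iff in Ha as [x [<- _]]. apply in_seq. unfold P0. pose proof (Mk_pos k). lia.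
  - intros k x y _ _. unfold P0. pose proof (Mk_mono k). lia. Qed.

Lemma lsum_seq_trunc (g : nat -> R) n M : (forall k, 0 <= g k) ->
  lsum (seq 0 M) (fun k => if Nat.ltb k n then g k else 0) <= lsum (seq 0 n) g.
Proof. intros Hg.
  assert (E : lsum (seq 0 M) (fun k => if Nat.ltb k n then g k else 0) = lsum (seq 0 (Nat.min M n)) g).
  { induction M; [simpl; reflexivity|]. rewrite <- !sumV_lsum in *. rewrite sumV_S, IHM.
    destruct (Nat.ltb_spec M n).
    - replace (Nat.min (S M) n) with (S (Nat.min M n)) by lia. rewrite sumV_S. f_equal. f_equal. lia.
    - replace (Nat.min (S M) n) with (Nat.min M n) by lia. lra. }
  rewrite E. replace n with (Nat.min M n + (n - Nat.min M n))%nat at 2 by lia.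
  rewrite seq_app, lsum_app. assert (0 <= lsum (seq (0 + Nat.min M n) (n - Nat.min M n)) g)
    by (apply lsum_nonneg; auto). lra. Qed.

Lemma gamma2_nonempty n c : network n c -> (1 <= n)%nat ->
  exists t, gamma2_bounds n (dist_sqrtReff n c) t.
Proof. intros Hnet Hn. set (d := dist_sqrtReff n c).
  assert (Hd0 : forall a b, 0 <= d a b) by (intros; apply sqrt_pos).
  set (Dm := diam d (seq 0 n)).
  exists (lsum (seq 0 n) (fun k => Rp k * Dm)). exists P0. split; [apply P0_adm|].
  intros x N Hx. unfold gamma_partial. fold (lsum (seq 0 (S N)) (fun k => Rpower 2 (INR k / 2) * diam d (block n (P0 k) x))).
  eapply Rle_trans; [|apply (lsum_seq_trunc (fun k => Rp k * Dm) n (S N))].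
  - apply lsum_le. intros k _. fold (Rp k). destruct (Nat.ltb_spec k n).
    + apply Rmult_le_compat_l; [left; apply Rp_pos|]. apply fold_Rmax_le; [apply diam_ge0|].
      intros a Ha. apply in_map_iff in Ha as [[y z] [<- Hp]]. apply in_prod_iff in Hp as [Hy Hz].
      apply block_in in Hy as [Hy _]. apply block_in in Hz as [Hz _]. simpl. apply diam_ge; apply in_seq; lia.
    + assert (diam d (block n (P0 k) x) <= 0).
      { apply fold_Rmax_le; [lra|]. intros a Ha. apply in_map_iff in Ha as [[y z] [<- Hp]].
        apply in_prod_iff in Hp as [Hy Hz]. apply block_in in Hy as [Hy Ey]. apply block_in in Hz as [Hz Ez].
        unfold P0 in Ey, Ez. pose proof (Mk_gt k). assert (y = x) by lia. assert (z = x) by lia. subst. simpl.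
        unfold d, dist_sqrtReff. rewrite Reff_diag by auto. rewrite sqrt_0. lra. }
      pose proof (Rp_pos k). nra.
  - intros k. apply Rmult_le_pos; [left; apply Rp_pos|apply diam_ge0]. Qed.

Lemma gamma2_glb n c : network n c -> (1 <= n)%nat ->
  is_glb (gamma2_bounds n (dist_sqrtReff n c)) (gamma2 n (dist_sqrtReff n c)).
Proof. intros Hnet Hn. unfold gamma2. apply epsilon_spec.
  set (E := gamma2_bounds n (dist_sqrtReff n c)).
  assert (HE0 : forall t, E t -> 0 <= t).
  { intros t [P [_ HP]]. specialize (HP 0%nat 0%nat ltac:(lia)).
    pose proof (gp_term n (dist_sqrtReff n c) P 0 0 ltac:(intros; apply sqrt_pos)).
    pose proof (Rp_pos 0). pose proof (diam_ge0 (dist_sqrtReff n c) (block n (P 0%nat) 0)). nra. }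
  destruct (gamma2_nonempty n c Hnet Hn) as [t0 Ht0].
  destruct (completeness (fun s => E (- s))) as [m [Hub Hlub]].
  - exists 0. intros s Hs. specialize (HE0 _ Hs). lra.
  - exists (- t0). rewrite Ropp_involutive. auto.
  - exists (- m). split.
    + intros t Ht. assert (- t <= m) by (apply Hub; rewrite Ropp_involutive; auto). lra.
    + intros b Hb. assert (m <= - b). { apply Hlub. intros s Hs. specialize (Hb _ Hs). lra. } lra. Qed.

Lemma one_block n Q v w : (num_blocks n Q <= 1)%nat -> (v < n)%nat -> (w < n)%nat -> Q v = Q w.
Proof. unfold num_blocks. intros H Hv Hw.
  assert (Iv : In (Q v) (nodup Nat.eq_dec (map Q (seq 0 n)))) by (apply nodup_In, in_map, in_seq; lia).
  assert (Iw : In (Q w) (nodup Nat.eq_dec (map Q (seq 0 n)))) by (apply nodup_In, in_map, in_seq; lia).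
  destruct (nodup Nat.eq_dec (map Q (seq 0 n))) as [|a [|b l]]; simpl in *; try tauto; [|lia].
  destruct Iv as [<-|[]]; destruct Iw as [<-|[]]; auto. Qed.

Lemma cvert_nonneg n c v : network n c -> (v < n)%nat -> 0 <= cvert n c v.
Proof. intros [_ [Hnn _]] Hv. unfold cvert. apply lsum_nonneg. intros x Hx; apply in_seq in Hx; apply Hnn; lia. Qed.

Lemma Reff_pos n c v w : network n c -> (v < n)%nat -> (w < n)%nat -> v <> w ->
  0 < Reff n c v w /\ 0 < cvert n c v /\ dist_sqrtReff n c v w * dist_sqrtReff n c v w = Reff n c v w.
Proof. intros. pose proof (Reff_lb n c v w H H0 H1 H2). pose proof (cvert_nonneg n c v H H0).
  assert (0 < Reff n c v w /\ 0 < cvert n c v).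
  { destruct (Rle_dec (Reff n c v w) 0); [nra|]. split; [lra|]. destruct (Rle_dec (cvert n c v) 0); nra. }
  destruct H5; repeat split; auto. unfold dist_sqrtReff. apply sqrt_sqrt; lra. Qed.

Lemma glb_nonneg n c : network n c -> (1 <= n)%nat -> 0 <= gamma2 n (dist_sqrtReff n c).
Proof. intros Hnet Hn. destruct (gamma2_glb n c Hnet Hn) as [_ H]. apply H.
  intros t [P [_ HP]]. specialize (HP 0%nat 0%nat ltac:(lia)).
  pose proof (gp_term n (dist_sqrtReff n c) P 0 0 ltac:(intros; apply sqrt_pos)).
  pose proof (Rp_pos 0). pose proof (diam_ge0 (dist_sqrtReff n c) (block n (P 0%nat) 0)). nra. Qed.

Lemma G1 n c v : network n c -> (2 <= n)%nat -> (v < n)%nat ->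
  1 <= cvert n c v * gamma2 n (dist_sqrtReff n c) ^ 2.
Proof. intros Hnet Hn Hv. set (w := if Nat.eqb v 0 then 1%nat else 0%nat).
  assert (Hw : (w < n)%nat) by (unfold w; destruct (Nat.eqb v 0); lia).
  assert (Hvw : v <> w) by (unfold w; destruct (Nat.eqb_spec v 0); lia).
  destruct (Reff_pos n c v w Hnet Hv Hw Hvw) as [HR [Hc Hdd]].
  pose proof (Reff_lb n c v w Hnet Hv Hw Hvw).
  set (g := gamma2 n (dist_sqrtReff n c)).
  assert (Hg : dist_sqrtReff n c v w <= g).
  { destruct (gamma2_glb n c Hnet ltac:(lia)) as [_ H2]. apply H2.
    intros t [P [[Hnb _] HP]]. specialize (HP v 0%nat Hv).
    pose proof (gp_term n (dist_sqrtReff n c) P v 0 ltac:(intros; apply sqrt_pos)).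
    rewrite Rp0 in H0.
    assert (dist_sqrtReff n c v w <= diam (dist_sqrtReff n c) (block n (P 0%nat) v)).
    { apply diam_ge; apply in_block; auto. apply one_block with n; auto. }
    lra. }
  pose proof (sqrt_pos (Reff n c v w)). fold (dist_sqrtReff n c v w) in H0.
  assert (Reff n c v w <= g ^ 2) by nra. nra. Qed.

Lemma NoDup_map_inj (Q : nat -> nat) L : NoDup L ->
  (forall a b, In a L -> In b L -> a <> b -> Q a <> Q b) -> NoDup (map Q L).
Proof. induction L; intros H Hinj; simpl; constructor.
  - inversion H; subst. intros Hin. apply in_map_iff in Hin as [b [Eb Hb]].
    apply (Hinj a b); simpl; auto. intros ->; auto.
  - inversion H; subst. apply IHL; auto. intros; apply Hinj; simpl; auto. Qed.

Lemma count_filter L (f : nat -> bool) : lsum L (fun v => if f v then 1 else 0) = INR (length (filter f L)).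
Proof. unfold lsum; induction L; [reflexivity|]. cbn [map fold_right]. rewrite IHL. cbn [filter]. destruct (f a); cbn [length]; [rewrite S_INR|]; lra. Qed.

Definition tb (x : nat -> R) (j : nat) (v : nat) : bool := if Rle_dec (x v) (2 ^ j / 2) then true else false.

Lemma G2 n c k : network n c -> (2 <= n)%nat ->
  let g := gamma2 n (dist_sqrtReff n c) in
  INR (length (filter (tb (fun v => cvert n c v * g ^ 2) k) (seq 0 n))) <= INR (Mk k).
Proof. intros Hnet Hn g. set (T := filter (tb (fun v => cvert n c v * g ^ 2) k) (seq 0 n)).
  apply le_INR. destruct (Nat.le_gt_cases (length T) (Mk k)) as [|Hgt]; auto. exfalso.
  assert (Hg1 := G1 n c 0 Hnet Hn ltac:(lia)). fold g in Hg1.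
  assert (Hg0 := glb_nonneg n c Hnet ltac:(lia)). fold g in Hg0.
  assert (Hgp : 0 < g) by (destruct (Rle_dec g 0); [assert (g = 0) by lra; subst; rewrite H in Hg1; simpl in Hg1; lra|lra]).
  assert (Hs2 : 1 < sqrt 2).
  { pose proof (sqrt_sqrt 2 ltac:(lra)). pose proof (sqrt_pos 2). nra. }
  assert (Hlb : sqrt 2 * g <= g).
  { destruct (gamma2_glb n c Hnet ltac:(lia)) as [_ H2]. apply H2.
    intros t [P [[Hnb _] HP]].
    destruct (classic (exists v w, In v T /\ In w T /\ v <> w /\ P k v = P k w)) as [[v [w [Hv [Hw [Hvw Hq]]]]]|Hno].
    - unfold T in Hv, Hw. apply filter_In in Hv as [Hv Htv]. apply filter_In in Hw as [Hw Htw].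
      apply in_seq in Hv. apply in_seq in Hw. unfold tb in Htv.
      destruct (Rle_dec (cvert n c v * g ^ 2) (2 ^ k / 2)) as [Hxv|]; [|discriminate].
      specialize (HP v k ltac:(lia)).
      pose proof (gp_term n (dist_sqrtReff n c) P v k ltac:(intros; apply sqrt_pos)).
      assert (Hdw : dist_sqrtReff n c v w <= diam (dist_sqrtReff n c) (block n (P k) v)).
      { apply diam_ge; apply in_block; auto; lia. }
      destruct (Reff_pos n c v w Hnet ltac:(lia) ltac:(lia) Hvw) as [HR [Hc Hdd]].
      pose proof (Reff_lb n c v w Hnet ltac:(lia) ltac:(lia) Hvw).
      set (X := Rp k * dist_sqrtReff n c v w).
      assert (HX0 : 0 <= X) by (unfold X; pose proof (Rp_pos k); pose proof (sqrt_pos (Reff n c v w)); unfold dist_sqrtReff; nra).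
      assert (HXt : X <= t) by (unfold X; pose proof (Rp_pos k); nra).
      assert (Hpow : 0 < 2 ^ k) by (apply pow_lt; lra).
      assert (HX2 : 2 * g ^ 2 <= X * X).
      { unfold X. replace (Rp k * dist_sqrtReff n c v w * (Rp k * dist_sqrtReff n c v w)) with
          ((Rp k * Rp k) * (dist_sqrtReff n c v w * dist_sqrtReff n c v w)) by ring.
        rewrite Rp_sq, Hdd.
        assert (cvert n c v * (2 ^ k * Reff n c v w - 2 * g ^ 2) >= 0) by nra.
        destruct (Rle_dec (2 * g ^ 2) (2 ^ k * Reff n c v w)); [lra|]. nra. }
      pose proof (sqrt_sqrt 2 ltac:(lra)). pose proof (sqrt_pos 2).
      destruct (Rle_dec (sqrt 2 * g) X); [lra|]. nra.
    - exfalso. assert (Hnd : NoDup (map (P k) T)).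
      { apply NoDup_map_inj; [apply NoDup_filter, seq_NoDup|]. intros a b Ha Hb Hab Heq. apply Hno; eauto 10. }
      assert (length (map (P k) T) <= num_blocks n (P k))%nat.
      { unfold num_blocks. apply NoDup_incl_length; auto. intros q Hq. apply nodup_In.
        apply in_map_iff in Hq as [a [<- Ha]]. apply in_map. unfold T in Ha. apply filter_In in Ha; tauto. }
      rewrite length_map in H. specialize (Hnb k). lia. }
  nra. Qed.

Lemma exp_le a b : a <= b -> exp a <= exp b.
Proof. intros [H|H]; [left; apply exp_increasing; auto|subst; lra]. Qed.

Lemma level N x : 1 <= x -> x <= 2 ^ N -> exists k, (k <= N)%nat /\ 2 ^ k / 2 <= x /\ x <= 2 ^ k.
Proof. induction N; intros H1 H2.
  - exists 0%nat. simpl in *. split; [lia|lra].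
  - destruct (Rle_dec x (2 ^ N)) as [Hle|Hgt].
    + destruct (IHN H1 Hle) as [k [Hk Hk2]]. exists k; split; [lia|auto].
    + exists (S N). split; [lia|]. change (2 ^ S N) with (2 * 2 ^ N) in *. lra. Qed.

Lemma pow2_ge N : INR N <= 2 ^ N.
Proof. induction N; [simpl; lra|]. rewrite S_INR. change (2 ^ S N) with (2 * 2 ^ N).
  assert (1 <= 2 ^ N) by (apply pow_R1_Rle; lra). lra. Qed.

Lemma exp_mult_pow a m : exp (a * INR m) = exp a ^ m.
Proof. induction m; [simpl; rewrite Rmult_0_r, exp_0; auto|]. rewrite S_INR.
  rewrite Rmult_plus_distr_l, Rmult_1_r, exp_plus, IHm. simpl. ring. Qed.

Lemma geom M : lsum (seq 0 M) (fun k => (1/2) ^ k) = 2 - 2 * (1/2) ^ M.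
Proof. induction M; [simpl; unfold lsum; simpl; lra|]. rewrite <- sumV_lsum, sumV_S, sumV_lsum, IHM.
  simpl. lra. Qed.

Lemma term_bound u k : let q := exp (- u / 2) in 4 * q <= 1/2 ->
  INR (Mk (S k)) * exp (- (u * 2 ^ k / 2)) <= 4 * q * (1/2) ^ k.
Proof. intros q Hq.
  assert (E : INR (Mk (S k)) * exp (- (u * 2 ^ k / 2)) = (4 * q) ^ (2 ^ k)%nat).
  { unfold Mk. rewrite pow_INR. replace (INR 2) with 2 by (simpl; lra).
    rewrite Nat.pow_succ_r', pow_mult. assert (H2k : 2 ^ k = INR (2 ^ k)) by (rewrite pow_INR; f_equal; simpl; lra). rewrite H2k.
    replace (- (u * INR (2 ^ k) / 2)) with ((- u / 2) * INR (2 ^ k)) by field.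
    rewrite exp_mult_pow. fold q. rewrite <- Rpow_mult_distr. f_equal. simpl. ring. }
  rewrite E. clear E.
  assert (Hq0 : 0 < q) by apply exp_pos.
  induction k.
  - simpl. lra.
  - rewrite Nat.pow_succ_r', Nat.mul_comm, pow_mult.
    assert (Hh : (1/2) ^ k <= 1). { apply Rle_trans with (1 ^ k); [apply pow_incr; lra|rewrite pow1; lra]. }
    assert (0 <= (4 * q) ^ (2 ^ k)%nat) by (apply pow_le; lra).
    assert (0 <= (1/2) ^ k) by (apply pow_le; lra).
    simpl. rewrite Rmult_1_r. set (a := (4 * q) ^ (2 ^ k)%nat) in *. set (h := (1/2) ^ k) in *.
    assert (a <= 1/2) by nra. assert (a * a <= a * (4 * q * h)) by nra.
    assert (a * (4 * q * h) <= 1/2 * (4 * q * h)) by nra. nra. Qed.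

Theorem mainTheorem12 :
  exists K : R,
    forall (n : nat) (c : nat -> nat -> R),
      (2 <= n)%nat -> network n c ->
      forall u : R, 16 <= u ->
        sumV n (fun v => exp (- (u * cvert n c v * (gamma2 n (dist_sqrtReff n c)) ^ 2)))
        <= K * exp (- u / 8).
Proof.
  exists 8. intros n c Hn Hnet u Hu.
  set (g := gamma2 n (dist_sqrtReff n c)).
  set (x := fun v => cvert n c v * g ^ 2).
  assert (HX : forall v, (v < n)%nat -> 1 <= x v) by (intros; apply G1; auto).
  set (B := lsum (seq 0 n) x).
  assert (HB : forall v, (v < n)%nat -> x v <= B).
  { intros v Hv. apply (lsum_ge_term (seq 0 n) x v); [|apply in_seq; lia].
    intros y Hy; apply in_seq in Hy; specialize (HX y ltac:(lia)); lra. }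
  destruct (INR_unbounded B) as [N HN]. pose proof (pow2_ge N) as HN2.
  set (e := fun k => exp (- (u * 2 ^ k / 2))).
  set (q := exp (- u / 2)).
  assert (Hq : 4 * q <= 1/2).
  { unfold q. assert (Ha : exp (-u/2) <= exp (Ropp 8)) by (apply exp_le; lra).
    pose proof (exp_ineq1_le 8) as Hb. rewrite exp_Ropp in Ha. pose proof (exp_pos 8).
    assert (Hc : / exp 8 <= / 9) by (apply Rinv_le_contravar; lra). lra. }
  apply Rle_trans with (lsum (seq 0 n) (fun v => lsum (seq 0 (S N))
      (fun k => (if tb x (S k) v then 1 else 0) * e k))).
  { rewrite sumV_lsum. apply lsum_le. intros v Hv. apply in_seq in Hv.
    destruct (level N (x v) (HX v ltac:(lia)) ltac:(specialize (HB v ltac:(lia)); lra)) as [k [Hk [Hk1 Hk2]]].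
    apply Rle_trans with ((fun k => (if tb x (S k) v then 1 else 0) * e k) k).
    - simpl. unfold tb. destruct (Rle_dec (x v) (2 ^ S k / 2)) as [_|Hf].
      2:{ exfalso. apply Hf. change (2 ^ S k) with (2 * 2 ^ k). lra. }
      rewrite Rmult_1_l. unfold e. apply exp_le. rewrite Rmult_assoc. change (cvert n c v * (g * (g * 1))) with (x v). assert (0 <= u * (x v - 2 ^ k / 2)) by (apply Rmult_le_pos; lra). lra.
    - apply (lsum_ge_term (seq 0 (S N)) (fun k => (if tb x (S k) v then 1 else 0) * e k) k).
      + intros j _. apply Rmult_le_pos; [destruct (tb x (S j) v); lra|left; apply exp_pos].
      + apply in_seq; lia. }
  rewrite lsum_swap.
  apply Rle_trans with (lsum (seq 0 (S N)) (fun k => 4 * q * (1/2) ^ k)).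
  { apply lsum_le. intros k _.
    rewrite (lsum_ext _ _ (fun v => e k * (if tb x (S k) v then 1 else 0))) by (intros; ring).
    rewrite lsum_scal, count_filter. pose proof (G2 n c (S k) Hnet Hn) as HG. simpl in HG. fold g x in HG.
    eapply Rle_trans; [|apply (term_bound u k Hq)].
    rewrite Rmult_comm. apply Rmult_le_compat_r; [left; apply exp_pos|]. exact HG. }
  rewrite lsum_scal, geom. pose proof (pow_le (1/2) (S N) ltac:(lra)) as Hp.
  assert (Hq8 : q <= exp (- u / 8)) by (apply exp_le; lra). pose proof (exp_pos (-u/2)) as Hq0. fold q in Hq0. nra.
Qed.
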